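(* Let $G$ be a graph and $a\neq b$ vertices of $G$. Then $a$ and $b$ are twins (i.e. $N(a)\setminus\{b\}=N(b)\setminus\{a\}$) if and only if the eigenvalue support of $e_a-e_b$ with respect to the Laplacian of $G$ consists of one eigenvalue, which is an integer.
   Context: $N(v)$ denotes the neighbourhood of $v$. Let $L=\Delta-A$ be the Laplacian of $G$ with spectral decomposition $L=\sum_r\theta_rE_r$ ($\theta_r$ distinct eigenvalues, $E_r$ orthogonal projections onto eigenspaces). The eigenvalue support of $x$ is the set of $\theta_r$ with $E_rx\neq0$. *)

(* Defs.v *)
From HB Require Import structures.
From mathcomp Require Import all_boot all_order all_algebra.
Set Implicit Arguments. Unset Strict Implicit. Unset Printing Implicit Defensive.
Import Order.TTheory GRing.Theory Num.Theory.
Local Open Scope ring_scope.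

Definition simple_graph (n : nat) (adj : rel 'I_n) : Prop :=
  symmetric adj /\ irreflexive adj.

Definition nbhd (n : nat) (adj : rel 'I_n) (v : 'I_n) : {set 'I_n} :=
  [set w | adj v w].

Definition twins (n : nat) (adj : rel 'I_n) (a b : 'I_n) : Prop :=
  nbhd adj a :\ b = nbhd adj b :\ a.

Definition laplacian (R : pzRingType) (n : nat) (adj : rel 'I_n) : 'M[R]_n :=
  \matrix_(i, j) ((if i == j then #|nbhd adj i|%:R else 0) - (adj i j)%:R).

Definition std_vec (R : pzRingType) (n : nat) (a : 'I_n) : 'rV[R]_n :=
  delta_mx 0 a.

(* Orthogonal projection E_theta onto the eigenspace of M for theta, acting on
   row vectors: projection onto the eigenspace V along its orthogonal
   complement {u | u *m V^T = 0} = rowspace of kermx V^T. *)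
Definition eigproj (R : rcfType) (n : nat) (M : 'M[R]_n) (theta : R) : 'M[R]_n :=
  proj_mx (eigenspace M theta) (kermx (eigenspace M theta)^T).

Definition eig_support (R : rcfType) (n : nat) (M : 'M[R]_n) (x : 'rV[R]_n)
  : pred R :=
  fun theta => eigenvalue M theta && (x *m eigproj M theta != 0).

(* Main.v *)
Require Import Defs.
From HB Require Import structures.
From mathcomp Require Import all_boot all_order all_algebra.
From mathcomp Require Import polyrcf complex lra.
Import Order.TTheory GRing.Theory Num.Theory.
Local Open Scope ring_scope.

Section Key.
Set Implicit Arguments. Unset Strict Implicit. Unset Printing Implicit Defensive.
Variable R : rcfType.

Definition dotr n (x y : 'rV[R]_n) : R := (x *m y^T) 0 0.

Lemma dotrE n (x y : 'rV[R]_n) : dotr x y = \sum_j x 0 j * y 0 j.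
Proof. by rewrite /dotr mxE; apply: eq_bigr => j _; rewrite mxE. Qed.

Lemma dotrC n (x y : 'rV[R]_n) : dotr x y = dotr y x.
Proof. by rewrite !dotrE; apply: eq_bigr => j _; rewrite mulrC. Qed.

Lemma dotrDl n (x y z : 'rV[R]_n) : dotr (x + y) z = dotr x z + dotr y z.
Proof. by rewrite /dotr mulmxDl mxE. Qed.

Lemma dotrBl n (x y z : 'rV[R]_n) : dotr (x - y) z = dotr x z - dotr y z.
Proof. by rewrite /dotr mulmxBl !mxE. Qed.

Lemma dotrZl n a (x z : 'rV[R]_n) : dotr (a *: x) z = a * dotr x z.
Proof. by rewrite /dotr -scalemxAl mxE. Qed.

Lemma dotrM n (M : 'M[R]_n) (x y : 'rV[R]_n) : M^T = M ->
  dotr (x *m M) y = dotr x (y *m M).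
Proof. by move=> sM; rewrite /dotr trmx_mul sM mulmxA. Qed.

Lemma dotr_ge0 n (x : 'rV[R]_n) : 0 <= dotr x x.
Proof. by rewrite dotrE sumr_ge0 // => j _; rewrite -expr2 sqr_ge0. Qed.

Lemma dotr_eq0 n (x : 'rV[R]_n) : (dotr x x == 0) = (x == 0).
Proof.
apply/idP/idP => [|/eqP->]; last by rewrite dotrE big1 // => j _; rewrite mxE mul0r.
rewrite dotrE psumr_eq0 => [/allP H|j _]; last by rewrite -expr2 sqr_ge0.
apply/eqP/rowP => j; rewrite mxE; apply/eqP.
by have := H j (mem_index_enum j); rewrite -expr2 sqrf_eq0.
Qed.

Notation toC := (real_complex R).

Lemma Re_sum (I : Type) (r : seq I) (F : I -> R[i]) :
  complex.Re (\sum_(i <- r) F i) = \sum_(i <- r) complex.Re (F i).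
Proof. by apply: (big_morph (@complex.Re R)) => // -[a b] [c d]. Qed.

Lemma Im_sum (I : Type) (r : seq I) (F : I -> R[i]) :
  complex.Im (\sum_(i <- r) F i) = \sum_(i <- r) complex.Im (F i).
Proof. by apply: (big_morph (@complex.Im R)) => // -[a b] [c d]. Qed.

Lemma ReM_mx m k l (D : 'M[R[i]]_(m, k)) (A : 'M[R]_(k, l)) :
  map_mx (@complex.Re R) (D *m map_mx toC A) = map_mx (@complex.Re R) D *m A.
Proof.
apply/matrixP => i j; rewrite !mxE Re_sum; apply: eq_bigr => s _.
by rewrite !mxE; case: (D i s) => x y; simpc.
Qed.

Lemma ImM_mx m k l (D : 'M[R[i]]_(m, k)) (A : 'M[R]_(k, l)) :
  map_mx (@complex.Im R) (D *m map_mx toC A) = map_mx (@complex.Im R) D *m A.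
Proof.
apply/matrixP => i j; rewrite !mxE Im_sum; apply: eq_bigr => s _.
by rewrite !mxE; case: (D i s) => x y; simpc.
Qed.

End Key.

Section K2.
Set Implicit Arguments. Unset Strict Implicit. Unset Printing Implicit Defensive.
Variable R : rcfType.
Notation toC := (real_complex R).

Lemma key n (M U : 'M[R]_n) : M^T = M -> (U *m M <= U)%MS -> U != 0 ->
  exists u : 'rV_n, [/\ u != 0, (u <= U)%MS & exists mu, u *m M = mu *: u].
Proof.
move=> sM stU Un0.
set f := map_mx toC M; set V := map_mx toC U.
have stV : (V *m f <= V)%MS by rewrite -map_mxM map_submx.
have rV : (0 < \rank V)%N by rewrite mxrank_map lt0n mxrank_eq0.
have [a /eigenvalueP [v Hv vn0]] := Theorem7' (restrict V f) rV.
have : (v *m row_base V <= eigenspace f a)%MS.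
  by rewrite -eigenspace_restrict //; apply/eigenspaceP.
move/eigenspaceP => Hw.
set w := v *m row_base V in Hw.
have wn0 : w != 0 by rewrite mul_mx_rowfree_eq0 ?row_base_free.
have /submxP [D wD] : (w <= V)%MS.
  by rewrite (submx_trans (submxMl _ _)) // eq_row_base.
clearbody w.
set p := map_mx (@complex.Re R) w; set q := map_mx (@complex.Im R) w.
have pU : (p <= U)%MS by rewrite /p wD ReM_mx submxMl.
have qU : (q <= U)%MS by rewrite /q wD ImM_mx submxMl.
have pM : p *m M = complex.Re a *: p - complex.Im a *: q.
  rewrite /p -ReM_mx -/f Hw; apply/rowP => j; rewrite !mxE.
  by case: (a) => a1 a2; case: (w 0 j) => x y; simpc.
have qM : q *m M = complex.Im a *: p + complex.Re a *: q.
  rewrite /q -ImM_mx -/f Hw; apply/rowP => j; rewrite !mxE.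
  by case: (a) => a1 a2; case: (w 0 j) => x y; simpc; rewrite addrC.
have E : complex.Im a * (dotr p p + dotr q q) = 0.
  have := dotrM p q sM; rewrite pM qM dotrBl !dotrZl.
  rewrite [dotr p (_ + _)]dotrC dotrDl !dotrZl [dotr q p]dotrC.
  by move=> E; lra.
have pq0 : dotr p p + dotr q q != 0.
  apply/negP => /eqP /eqP; rewrite paddr_eq0 ?dotr_ge0 // !dotr_eq0.
  case/andP => /eqP p0 /eqP q0; move/negP: wn0; apply; apply/eqP/rowP => j.
  move/rowP/(_ j): p0; move/rowP/(_ j): q0; rewrite !mxE.
  by case: (w 0 j) => x y /= -> ->.
have Ia0 : complex.Im a = 0.
  by move/eqP: E; rewrite mulf_eq0 (negbTE pq0) orbF => /eqP.
rewrite Ia0 scale0r subr0 in pM; rewrite Ia0 scale0r add0r in qM.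
have [p0|pn0] := eqVneq p 0.
  exists q; split => //; last by exists (complex.Re a).
  apply/negP => /eqP q0; move: pq0; rewrite p0 q0 /dotr !mul0mx mxE addr0 eqxx.
  done.
by exists p; split => //; exists (complex.Re a).
Qed.
End K2.

Section K3.
Set Implicit Arguments. Unset Strict Implicit. Unset Printing Implicit Defensive.
Variable R : rcfType.

Lemma eig_stable n (M : 'M[R]_n) t : (eigenspace M t *m M <= eigenspace M t)%MS.
Proof. by rewrite (eigenspaceP (submx_refl _)) scalemx_sub. Qed.

Lemma complete n (M : 'M[R]_n) (y : 'rV_n) : M^T = M ->
  (forall t, y *m (eigenspace M t)^T = 0) -> y = 0.
Proof.
move=> sM Hy.
set r := rootsR (char_poly M).
set S := (\sum_(i < size r) eigenspace M r`_i)%MS.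
set U := kermx S^T.
have SM : (S *m M <= S)%MS.
  rewrite sumsmxMr; apply/sumsmx_subP => i _.
  by apply: (sumsmx_sup i) => //; apply: eig_stable.
have stU : (U *m M <= U)%MS.
  have /submxP [D SD] := SM.
  have /sub_kermxP US : (U <= kermx S^T)%MS := submx_refl _.
  apply/sub_kermxP; rewrite -mulmxA -{1}sM -trmx_mul SD trmx_mul mulmxA US.
  by rewrite mul0mx.
have yU : (y <= U)%MS.
  apply/sub_kermxP; apply: trmx_inj; rewrite trmx_mul trmxK trmx0.
  apply/sub_kermxP/sumsmx_subP => i _; apply/sub_kermxP.
  by apply: trmx_inj; rewrite trmx_mul trmxK trmx0 Hy.
have [U0|Un0] := eqVneq U 0.
  by apply/eqP; rewrite -submx0 -U0.
have [u [un0 uU [mu umu]]] := key sM stU Un0.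
have : (u <= S)%MS.
  have mur : mu \in r.
    have := roots_on_rootsR (monic_neq0 (char_poly_monic M)) mu.
    rewrite -/r => <-; rewrite in_itv /= -eigenvalue_root_char.
    by apply/eigenvalueP; exists u.
  have hi : (index mu r < size r)%N by rewrite index_mem.
  apply: (sumsmx_sup (Ordinal hi)) => //=; rewrite (nth_index _ mur).
  by apply/eigenspaceP.
case/submxP => w uw.
have /sub_kermxP uS := uU.
have : dotr u u = 0.
  by rewrite /dotr {2}uw trmx_mul mulmxA uS mul0mx mxE.
by move/eqP; rewrite dotr_eq0 (negbTE un0).
Qed.
End K3.

Section K4.
Set Implicit Arguments. Unset Strict Implicit. Unset Printing Implicit Defensive.
Variable R : rcfType.

Lemma orth_self n m (A : 'M[R]_(m, n)) (v : 'rV_n) :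
  (v <= A)%MS -> v *m A^T = 0 -> v = 0.
Proof.
case/submxP => w -> vA; apply/eqP; rewrite -dotr_eq0.
by rewrite /dotr trmx_mul mulmxA vA mul0mx mxE.
Qed.

Section EP.
Variables (n : nat) (M : 'M[R]_n) (t : R).
Hypothesis sM : M^T = M.
Local Notation E := (eigenspace M t).
Local Notation K := (kermx E^T).

Lemma cap0 : (E :&: K = 0)%MS.
Proof.
apply/eqP; rewrite -submx0; apply/rV_subP => v; rewrite sub_capmx submx0.
case/andP => vE /sub_kermxP vK; apply/eqP; exact: orth_self vE vK.
Qed.

Lemma full : row_full (E + K)%MS.
Proof.
rewrite /row_full mxrank_disjoint_sum ?cap0 // mxrank_ker mxrank_tr.
by rewrite subnKC // rank_leq_col.
Qed.

Lemma ep_id m (v : 'M_(m, n)) : (v <= E)%MS -> v *m eigproj M t = v.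
Proof. by move=> vE; rewrite /eigproj proj_mx_id ?cap0. Qed.

Lemma ep_0 m (v : 'M_(m, n)) : v *m E^T = 0 -> v *m eigproj M t = 0.
Proof. by move=> vK; rewrite /eigproj proj_mx_0 ?cap0 //; apply/sub_kermxP. Qed.

Lemma ep_0r m (v : 'M_(m, n)) : v *m eigproj M t = 0 -> v *m E^T = 0.
Proof.
move=> vP; apply/sub_kermxP.
have := add_proj_mx cap0 (submx_full v full).
rewrite /eigproj in vP; rewrite vP add0r => <-; exact: proj_mx_sub.
Qed.

Lemma ep_proj : eigproj M t *m eigproj M t = eigproj M t.
Proof. by rewrite /eigproj proj_mx_proj ?cap0. Qed.

Lemma ep_sub m (v : 'M_(m, n)) : (v *m eigproj M t <= E)%MS.
Proof. exact: proj_mx_sub. Qed.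

Lemma orth m (w : 'M_(m, n)) s : w *m M = s *: w -> t != s -> w *m E^T = 0.
Proof.
move=> wM ts.
have h1 : w *m M *m E^T = s *: (w *m E^T) by rewrite wM -scalemxAl.
have h2 : w *m M *m E^T = t *: (w *m E^T).
  rewrite -mulmxA -{1}sM -trmx_mul (eigenspaceP (submx_refl _)).
  by rewrite linearZ /= scalemxAr.
move/eqP: h2; rewrite h1 -subr_eq0 -scalerBl scaler_eq0 subr_eq0 eq_sym.
by rewrite (negbTE ts) => /eqP.
Qed.

End EP.
End K4.

Section Graph.
Set Implicit Arguments. Unset Strict Implicit. Unset Printing Implicit Defensive.
Variables (R : rcfType) (n : nat) (adj : rel 'I_n) (a b : 'I_n).
Hypotheses (Hsym : symmetric adj) (Hirr : irreflexive adj) (ab : a != b).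
Local Notation L := (laplacian R adj).
Local Notation x := (std_vec R a - std_vec R b).

Lemma lap_sym : L^T = L.
Proof.
apply/matrixP => i j; rewrite !mxE eq_sym (Hsym j i).
by case: eqP => [->|].
Qed.

Lemma xL_entry j : (x *m L) 0 j =
  ((if a == j then #|nbhd adj a|%:R else 0) - (adj a j)%:R) -
  ((if b == j then #|nbhd adj b|%:R else 0) - (adj b j)%:R).
Proof. by rewrite mulmxBl /std_vec -!rowE !mxE. Qed.

Lemma x_entry j : x 0 j = (j == a)%:R - (j == b)%:R.
Proof. by rewrite !mxE. Qed.

Lemma fwd : twins adj a b -> x *m L = (#|nbhd adj a| + adj a b)%:R *: x.
Proof.
move=> tw.
have hdeg : #|nbhd adj a| = #|nbhd adj b|.
  rewrite (cardsD1 b) (cardsD1 a (nbhd adj b)) tw; congr addn.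
  by rewrite !inE Hsym.
apply/rowP => j; rewrite xL_entry [RHS]mxE x_entry.
have ba : b != a by rewrite eq_sym.
case: (eqVneq j a) => [->|ja].
  rewrite (negbTE ab) (negbTE ba) Hirr (Hsym b a) natrD /=.
  by rewrite !subr0 sub0r opprK mulr1.
case: (eqVneq j b) => [->|jb].
  rewrite Hirr hdeg natrD /=.
  lra.
move: (tw); rewrite /twins => /setP /(_ j); rewrite !in_setD1 !inE ja jb /=.
by move=> ->; rewrite !subrr mulr0.
Qed.

Lemma bwd t : x *m L = t *: x -> twins adj a b.
Proof.
move=> Hx; rewrite /twins; apply/setP => j; rewrite !in_setD1 !inE.
case: (eqVneq j a) => [->|ja]; first by rewrite Hirr !andbF.
case: (eqVneq j b) => [->|jb]; first by rewrite Hirr !andbF.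
rewrite /=; have := congr1 (fun M : 'rV[R]_n => M ord0 j) Hx; rewrite xL_entry [RHS]mxE x_entry.
rewrite (negbTE ja) (negbTE jb) subrr mulr0.
have -> : (a == j) = false by rewrite eq_sym (negbTE ja).
have -> : (b == j) = false by rewrite eq_sym (negbTE jb).
rewrite !sub0r opprK => h.
have : ((adj a j : nat)%:R == (adj b j : nat)%:R :> R) by apply/eqP; lra.
by rewrite eqr_nat; case: (adj a j); case: (adj b j).
Qed.

End Graph.

Theorem mainTheorem11 (R : rcfType) (n : nat) (adj : rel 'I_n) (a b : 'I_n) :
  simple_graph adj -> a != b ->
  (twins adj a b <->
   exists z : int, forall theta : R,
     eig_support (laplacian R adj) (std_vec R a - std_vec R b) theta
     = (theta == z%:~R)).
Proof.
move=> [Hsym Hirr] ab.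
have sL : (laplacian R adj)^T = laplacian R adj by apply: lap_sym.
have xn0 : std_vec R a - std_vec R b != 0.
  apply/eqP => /rowP /(_ a); rewrite !mxE !eqxx /= (negbTE ab) subr0 => /eqP.
  by rewrite oner_eq0.
split.
  move=> tw; exists (#|nbhd adj a| + adj a b)%N => theta.
  have hx : (std_vec R a - std_vec R b) *m laplacian R adj =
     (#|nbhd adj a| + adj a b)%:R *: (std_vec R a - std_vec R b) by apply: fwd.
  have -> : ((#|nbhd adj a| + adj a b)%N%:Z)%:~R = (#|nbhd adj a| + adj a b)%:R :> R by [].
  rewrite /eig_support.
  case: (eqVneq theta (#|nbhd adj a| + adj a b)%:R) => [->|nt].
    apply/andP; split; first by apply/eigenvalueP; exists (std_vec R a - std_vec R b).
    by rewrite ep_id //; apply/eigenspaceP.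
  by rewrite ep_0 ?eqxx ?andbF //; apply: (orth sL hx nt).
case=> z H.
move: xn0 H; set x := std_vec R a - std_vec R b => xn0 H.
set t : R := z%:~R.
set P := eigproj (laplacian R adj) t.
have y0 : x - x *m P = 0.
  apply: (complete sL) => th.
  case: (eqVneq th t) => [->|nt].
    by apply: ep_0r; rewrite mulmxBl -mulmxA ep_proj // subrr.
  have [ev|nev] := boolP (eigenvalue (laplacian R adj) th).
    have := H th; rewrite /eig_support ev (negbTE nt) /= => /negbFE/eqP hx0.
    have xPL : x *m P *m laplacian R adj =
               t *: (x *m P).
      by apply/eigenspaceP; apply: ep_sub.
    by rewrite mulmxBl (ep_0r hx0) (orth sL xPL nt) subrr.
  by move: nev; rewrite /eigenvalue negbK => /eqP ->; rewrite trmx0 mulmx0.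
move/eqP: y0; rewrite subr_eq0 => /eqP hx.
have : x *m laplacian R adj = t *: x.
  by rewrite hx; apply/eigenspaceP; apply: ep_sub.
exact: bwd.
Qed.
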